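(* Let $L$ be a finite flag complex of dimension $k$, let $M\in Z_k(L;\mathbb{Z}/2)$ be a $k$-cycle (identified with its support), and let $\Delta$ be any $k$-simplex of $M$. Then $(M,\Delta)$ satisfies the $*$-condition: for all $k$-simplices $\sigma,\tau$ of $M$ such that every vertex of $\Delta$ lies in $\sigma\cup\tau$, one has $\sigma\cap\tau\subset\Delta$.
   Context: A flag complex is a simplicial complex in which every finite set of pairwise adjacent vertices spans a simplex. *)

(* Defs.v *)
From mathcomp Require Import all_boot.
Set Implicit Arguments. Unset Strict Implicit. Unset Printing Implicit Defensive.

Definition simplicial_complex (V : finType) (L : {set {set V}}) : Prop :=
  (forall s, s \in L -> s != set0) /\
  (forall s t : {set V}, s \in L -> t \subset s -> t != set0 -> t \in L).

(* Flag: every finite nonempty set of pairwise adjacent vertices spans a simplex.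
   (u = v gives [set u] \in L, i.e. all members are vertices of L.) *)
Definition flag_complex (V : finType) (L : {set {set V}}) : Prop :=
  simplicial_complex L /\
  (forall A : {set V}, A != set0 ->
     (forall u v, u \in A -> v \in A -> [set u; v] \in L) -> A \in L).

Definition has_dim (V : finType) (L : {set {set V}}) (k : nat) : Prop :=
  (exists2 s, s \in L & #|s| = k.+1) /\ (forall s, s \in L -> #|s| <= k.+1).

(* A k-cycle of L with Z/2 coefficients, identified with its support M:
   a set of k-simplices of L whose mod-2 boundary vanishes, i.e. every
   (k-1)-simplex of L is a face of an even number of members of M. *)
Definition Z2_cycle (V : finType) (L : {set {set V}}) (k : nat)
    (M : {set {set V}}) : Prop :=
  M \subset L /\ (forall s, s \in M -> #|s| = k.+1) /\
  (forall F, F \in L -> #|F| = k -> ~~ odd #|[set s in M | F \subset s]|).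

Definition star_condition (V : finType) (M : {set {set V}}) (D : {set V}) : Prop :=
  forall sigma tau, sigma \in M -> tau \in M ->
    D \subset sigma :|: tau -> sigma :&: tau \subset D.

(* Main.v *)
Require Import Defs.
From mathcomp Require Import all_boot.

Theorem mainTheorem12 (V : finType) (L : {set {set V}}) (k : nat)
    (M : {set {set V}}) (D : {set V}) :
  flag_complex L -> has_dim L k -> Z2_cycle L k M -> D \in M ->
  star_condition M D.
Proof.
move=> [[Hne Hsub] Hflag] [_ Hdim] [HML [Hcard _]] HD.
move=> s t Hs Ht HDst; apply/subsetP => v /setIP [vs vt].
apply/negPn/negP => vD.
have inL : forall x, x \in M -> x \in L by move=> x Hx; exact: (subsetP HML).
have sub2 : forall x u w, x \in M -> u \in x -> w \in x -> [set u; w] \in L.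
  move=> x u w Hx ux wx; apply: (Hsub x) => //; first exact: inL.
    by apply/subsetP => y /set2P [] ->.
  by apply/set0Pn; exists u; rewrite !inE eqxx.
have edge : forall u w, u \in v |: D -> w \in v |: D -> [set u; w] \in L.
  have eD : forall u, u \in D -> [set u; v] \in L.
    move=> u uD; have := subsetP HDst u uD; rewrite inE => /orP [us|ut].
      exact: (sub2 s).
    exact: (sub2 t).
  move=> u w; rewrite !inE => /orP [/eqP->|uD] /orP [/eqP->|wD].
  - exact: (sub2 s).
  - by rewrite setUC; apply: eD.
  - exact: eD.
  - exact: (sub2 D).
have Hin : v |: D \in L.
  apply: Hflag => //; apply/set0Pn; exists v; by rewrite !inE eqxx.
have := Hdim _ Hin; rewrite cardsU1 (negbTE vD) Hcard //.
by rewrite ltnn.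
Qed.
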